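(* Let $H$ be a graph such that $L(H)$ has a $K_t$-immersion. Then for every integer $m\geq 2$, the line graph $L(mH)$ has a $K_{mt}$-immersion.
   Context: Graphs are finite and may have parallel edges but no loops. The line graph $L(H)$ of a graph $H$ is the simple graph whose vertex set is $E(H)$, in which two distinct edges of $H$ are adjacent iff they share at least one endpoint (so parallel edges of $H$ are adjacent in $L(H)$). For $m\geq 2$, $mH$ denotes the graph obtained from $H$ by replacing each edge $e$ by $m$ parallel copies of $e$. A graph $G$ has a $K_t$-immersion if there is an injective map $\phi$ from the vertex set of $K_t$ to $V(G)$ and, for each pair $u\neq v$ of vertices of $K_t$, a path in $G$ joining $\phi(u)$ and $\phi(v)$, such that these $\binom{t}{2}$ paths are pairwise edge-disjoint (equivalently, $K_t$ can be obtained from a subgraph of $G$ by repeatedly splitting off pairs of adjacent edges and deleting isolated vertices). *)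

(* Defs.v *)
From mathcomp Require Import all_boot.
Set Implicit Arguments. Unset Strict Implicit. Unset Printing Implicit Defensive.

(* A (loopless multi)graph H is given by finite types V (vertices), E (edges)
   and an endpoint map ends : E -> V * V with (ends e).1 != (ends e).2.
   Parallel edges = distinct edges with the same endpoints. *)

Definition loopless (V E : finType) (ends : E -> V * V) : Prop :=
  forall e, (ends e).1 != (ends e).2.

Definition incident (V E : finType) (ends : E -> V * V) (e : E) (v : V) : bool :=
  (v == (ends e).1) || (v == (ends e).2).

Definition line_adj (V E : finType) (ends : E -> V * V) : rel E :=
  fun e f => (e != f) && [exists v, incident ends e v && incident ends f v].

(* mH: each edge e replaced by m parallel copies (e, i), i < m. *)
Definition mult_ends (m : nat) (V E : finType) (ends : E -> V * V)
  : E * 'I_m -> V * V := fun p => ends p.1.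

Definition is_path (T : finType) (adj : rel T) (x y : T) (p : seq T) : Prop :=
  [/\ path adj x p, last x p = y & uniq (x :: p)].

Definition path_steps (T : finType) (x : T) (p : seq T) : seq (T * T) :=
  zip (x :: p) p.

Definition edge_disjoint (T : finType) (x : T) (p : seq T) (x' : T) (p' : seq T)
  : Prop :=
  forall a b, (a, b) \in path_steps x p ->
    ((a, b) \notin path_steps x' p') && ((b, a) \notin path_steps x' p').

Definition has_K_immersion (T : finType) (adj : rel T) (t : nat) : Prop :=
  exists phi : 'I_t -> T, injective phi /\
  exists P : 'I_t -> 'I_t -> seq T,
    (forall u v : 'I_t, u < v -> is_path adj (phi u) (phi v) (P u v)) /\
    (forall u v u' v' : 'I_t, u < v -> u' < v' -> (u, v) != (u', v') ->
        edge_disjoint (phi u) (P u v) (phi u') (P u' v')).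
Arguments mult_ends m {V E} ends _.

(* Main.v *)
Require Import Defs.
From mathcomp Require Import all_boot ssralg zmodp.
Import GRing.Theory.
Set Implicit Arguments. Unset Strict Implicit. Unset Printing Implicit Defensive.

Lemma steps_nth (T : finType) (x : T) p a b : (a,b) \in path_steps x p ->
  exists2 l, l < size p & (a = nth x (x::p) l /\ b = nth x p l).
Proof.
move=> /(nthP (x,x)) [l]; rewrite /path_steps size_zip /= (minn_idPr (leqnSn _)) => hl.
rewrite nth_zip_cond size_zip /= (minn_idPr (leqnSn _)) hl => -[<- <-]; by exists l.
Qed.

Lemma nth_steps (T : finType) (x : T) p l : l < size p ->
  (nth x (x::p) l, nth x p l) \in path_steps x p.
Proof.
move=> hl; apply/(nthP (x,x)); exists l.
  by rewrite size_zip /= (minn_idPr (leqnSn _)).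
by rewrite nth_zip_cond size_zip /= (minn_idPr (leqnSn _)) hl.
Qed.

Definition liftp (E : finType) (m : nat) (x : E) (p : seq E) (lab : nat -> 'I_m)
  : seq (E * 'I_m) := mkseq (fun l => (nth x p l, lab l.+1)) (size p).

Lemma size_liftp (E : finType) m x p (lab : nat -> 'I_m) : size (@liftp E m x p lab) = size p.
Proof. by rewrite size_mkseq. Qed.

Lemma liftp_nth0 (E : finType) m (x : E) p (lab : nat -> 'I_m) d n : n <= size p ->
  nth d ((x, lab 0) :: liftp x p lab) n = (nth x (x::p) n, lab n).
Proof. by case: n => [|n] //= hn; rewrite nth_mkseq. Qed.

Lemma liftp_nth (E : finType) m (x : E) p (lab : nat -> 'I_m) d n : n < size p ->
  nth d (liftp x p lab) n = (nth x p n, lab n.+1).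
Proof. by move=> hn; rewrite nth_mkseq. Qed.

Lemma liftp_steps (E : finType) m (x : E) p (lab : nat -> 'I_m) a b :
  (a,b) \in path_steps (x, lab 0) (liftp x p lab) ->
  exists2 l, l < size p & (a = (nth x (x::p) l, lab l) /\ b = (nth x p l, lab l.+1)).
Proof.
move=> /steps_nth [l]; rewrite size_liftp => hl [-> ->]; exists l => //.
by rewrite liftp_nth0 ?liftp_nth // ltnW.
Qed.

Lemma lift_adj (V E : finType) (ends : E -> V * V) m e f (a b : 'I_m) :
  line_adj ends e f -> line_adj (mult_ends m ends) (e,a) (f,b).
Proof.
rewrite /line_adj => /andP [ne ex]; apply/andP; split => //.
by apply: contra ne => /eqP [->].
Qed.

Lemma intra_adj (V E : finType) (ends : E -> V * V) m e (a b : 'I_m) :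
  a != b -> line_adj (mult_ends m ends) (e,a) (e,b).
Proof.
move=> ne; apply/andP; split; first by apply: contra ne => /eqP [->].
by apply/existsP; exists (ends e).1; rewrite /incident /mult_ends /= eqxx.
Qed.

Lemma lift_path (V E : finType) (ends : E -> V * V) m x y p (lab : nat -> 'I_m) :
  is_path (line_adj ends) x y p ->
  is_path (line_adj (mult_ends m ends)) (x, lab 0) (y, lab (size p)) (liftp x p lab).
Proof.
move=> [hp hl hu]; split.
- apply/(pathP (x, lab 0)) => n; rewrite size_liftp => hn.
  rewrite liftp_nth0 ?liftp_nth ?(ltnW hn) //; apply: lift_adj.
  by move/(pathP x): hp => /(_ n hn).
- by rewrite (last_nth (x, lab 0)) size_liftp liftp_nth0 // -last_nth hl.
- apply: (@map_uniq _ _ fst); rewrite /= /liftp /mkseq -map_comp.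
  by have -> : [seq (fst \o (fun l => (nth x p l, lab l.+1))) i | i <- iota 0 (size p)] = p
    by exact: (mkseq_nth x p).
Qed.

Definition labf (m' k : nat) (i j : 'I_m'.+2) (n : nat) : 'I_m'.+2 :=
  if n == 0 then i else if odd (k - n) then (i + j)%R else j.

Lemma labf_inj m' k i j i' j' l : l < k ->
  @labf m' k i j l = @labf m' k i' j' l -> @labf m' k i j l.+1 = @labf m' k i' j' l.+1 ->
  i = i' /\ j = j'.
Proof.
rewrite /labf /= => hl; rewrite -(subnSK hl) /=.
case: l hl => [|l] hl /= .
  move=> <-; case: ifP => _ h; last by [].
  by split => //; exact: (addrI _ h).
by case: (odd (k - l.+2)) => /= h1 h2; first [move: h2; rewrite h1 => /addIr -> | move: h1; rewrite h2 => /addIr ->].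
Qed.

Lemma labf_last m' k i j : 0 < k -> @labf m' k i j k = j.
Proof. by rewrite /labf subnn; case: k. Qed.

From mathcomp Require Import zify.

Lemma lift_steps_ne (V E : finType) (ends : E -> V * V) m x y p (lab : nat -> 'I_m) a b :
  is_path (line_adj ends) x y p ->
  (a,b) \in path_steps (x, lab 0) (liftp x p lab) -> a.1 != b.1.
Proof.
case=> hp _ _ /liftp_steps [l hl [-> ->]] /=.
by move/(pathP x): hp => /(_ l hl) /andP [].
Qed.

Lemma lift_proj (E : finType) m (x : E) p (lab : nat -> 'I_m) a b :
  (a,b) \in path_steps (x, lab 0) (liftp x p lab) -> (a.1, b.1) \in path_steps x p.
Proof. by move=> /liftp_steps [l hl [-> ->]] /=; exact: nth_steps. Qed.

Lemma lift_same (E : finType) m (x : E) p (lab1 lab2 : nat -> 'I_m) a b a' b' :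
  uniq (x::p) ->
  (a,b) \in path_steps (x, lab1 0) (liftp x p lab1) ->
  (a',b') \in path_steps (x, lab2 0) (liftp x p lab2) ->
  (a = a' /\ b = b') \/ (a = b' /\ b = a') ->
  exists2 l, l < size p & (lab1 l = lab2 l /\ lab1 l.+1 = lab2 l.+1).
Proof.
move=> hu /liftp_steps [l hl [-> ->]] /liftp_steps [l' hl' [-> ->]] [[e1 e2]|[e1 e2]].
- case: e1 => /eqP e1 el; rewrite nth_uniq // in e1; try exact: ltnW.
  move/eqP: e1 => e1; subst l'; have e2' : lab1 l.+1 = lab2 l.+1 by case: e2.
  by exists l => //; split.
- case: e1 => /eqP e1 _; case: e2 => /eqP e2 _.
  change (is_true (nth x (x::p) l == nth x (x::p) l'.+1)) in e1.
  change (is_true (nth x (x::p) l.+1 == nth x (x::p) l')) in e2.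
  rewrite nth_uniq // in e1; try exact: ltnW.
  rewrite nth_uniq // in e2; try exact: ltnW.
  move/eqP: e1; move/eqP: e2; lia.
Qed.

Theorem theorem1p2 (V E : finType) (ends : E -> V * V) (t : nat) :
  loopless ends ->
  has_K_immersion (line_adj ends) t ->
  forall m : nat, 2 <= m ->
    has_K_immersion (line_adj (mult_ends m ends)) (m * t).
Proof.
move=> _ [phi [phi_inj [P [HP HD]]]] [|[|m']] // _.
have q_lt : forall w : 'I_(m'.+2 * t), w %/ m'.+2 < t.
  by move=> w; rewrite ltn_divLR // [t * _]mulnC.
pose q (w : 'I_(m'.+2 * t)) : 'I_t := Ordinal (q_lt w).
have r_lt : forall w : 'I_(m'.+2 * t), w %% m'.+2 < m'.+2.
  by move=> w; rewrite ltn_mod.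
pose r (w : 'I_(m'.+2 * t)) : 'I_m'.+2 := Ordinal (r_lt w).
pose phi' w := (phi (q w), r w).
have qr_inj : forall w w', q w = q w' -> r w = r w' -> w = w'.
  move=> w w' /(congr1 val) /= h1 /(congr1 val) /= h2; apply: val_inj.
  by rewrite /= (divn_eq w m'.+2) (divn_eq w' m'.+2) h1 h2.
have phi'_inj : injective phi'.
  move=> w w'; rewrite /phi' => -[/phi_inj h1 h2].
  by apply: qr_inj h1 _; apply: val_inj.
have hlt : forall w w' : 'I_(m'.+2 * t), w < w' -> q w <> q w' -> q w < q w'.
  move=> w w' hww hq.
  have h0 : q w <= q w' by exact: leq_div2r (ltnW hww).
  rewrite ltn_neqAle h0 andbT.
  apply/negP => /eqP h; apply: hq. exact: val_inj.
pose lab w w' := @labf m' (size (P (q w) (q w'))) (r w) (r w').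
pose P' w w' := if q w == q w' then [:: phi' w']
  else liftp (phi (q w)) (P (q w) (q w')) (lab w w').
exists phi'; split => //; exists P'; split.
  move=> w w' hww; rewrite /P'; case: eqP => hq.
    have hr : r w != r w'.
      by apply/eqP => hr; have e := qr_inj _ _ hq hr; rewrite e ltnn in hww.
    split => /=; first by rewrite andbT /phi' hq intra_adj.
      by [].
    rewrite andbT inE; apply/eqP => /phi'_inj e; by rewrite e ltnn in hww.
  have hl := hlt _ _ hww hq.
  have hp := HP _ _ hl.
  have hk : 0 < size (P (q w) (q w')).
    case: hp => _ hl' _; move: hl'; case: (P _ _) => //= /phi_inj e'.
    by rewrite e' ltnn in hl.
  have h := @lift_path V E ends _ _ _ _ (lab w w') hp.
  by rewrite /lab labf_last // in h.
move=> w1 w2 w3 w4 h12 h34 hne a b hab.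
suff key : forall a' b', (a',b') \in path_steps (phi' w3) (P' w3 w4) ->
    (a = a' /\ b = b') \/ (a = b' /\ b = a') -> False.
  by apply/andP; split; apply/negP => h; apply: (key _ _ h); [left|right].
move=> a' b' hab' heq.
move: hab hab'; rewrite /P'; case: eqP => hq12; case: eqP => hq34.
- rewrite /path_steps /= !inE => /eqP [ha hb] /eqP [ha' hb']; subst.
  case: heq => [[/phi'_inj e1 /phi'_inj e2] | [/phi'_inj e1 /phi'_inj e2]].
    by rewrite e1 e2 eqxx in hne.
  by rewrite -e1 -e2 in h34; have := ltn_trans h12 h34; rewrite ltnn.
- rewrite /path_steps /= !inE => /eqP [ha hb] hab'.
  have ne := lift_steps_ne (HP _ _ (hlt _ _ h34 hq34)) hab'.
  case: heq => [[ea eb]|[ea eb]]; rewrite -ea -eb ha hb /= hq12 eqxx in ne; done.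
- move=> hab; rewrite /path_steps /= !inE => /eqP [ha' hb'].
  have ne := lift_steps_ne (HP _ _ (hlt _ _ h12 hq12)) hab.
  case: heq => [[ea eb]|[ea eb]]; rewrite ea eb ha' hb' /= hq34 eqxx in ne; done.
move=> hab hab'.
case: (eqVneq (q w1, q w2) (q w3, q w4)) => [e|hne'].
  have e13 : q w1 = q w3 := congr1 fst e.
  have e24 : q w2 = q w4 := congr1 snd e.
  have hab'' : (a',b') \in path_steps (phi (q w1), r w3)
     (liftp (phi (q w1)) (P (q w1) (q w2))
        (@labf m' (size (P (q w1) (q w2))) (r w3) (r w4))).
    by rewrite e13 e24; exact: hab'.
  have [_ _ hu] := HP _ _ (hlt _ _ h12 hq12).
  have [l hl [el1 el2]] := lift_same hu hab hab'' heq.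
  have [er1 er2] := labf_inj hl el1 el2.
  have ew1 := qr_inj _ _ e13 er1.
  have ew2 := qr_inj _ _ e24 er2.
  by rewrite ew1 ew2 eqxx in hne.
have := HD _ _ _ _ (hlt _ _ h12 hq12) (hlt _ _ h34 hq34) hne' _ _ (lift_proj hab).
have hp' := lift_proj hab'.
case/andP => n1 n2.
case: heq => [[ea eb]|[ea eb]].
  by rewrite ea eb hp' in n1.
by rewrite ea eb hp' in n2.
Qed.
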